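(* For all integers $n\ge0$, all $\mathbf{s}=(s_1,\dots,s_d)\in\mathbb{N}^d$ and all $y\in[-\pi/2,\pi/2]$, \[ \sum_{n_1>\cdots>n_d>n}\frac{a_{n_1}(\sin y)}{(2n_1+1)^{s_1}\cdots(2n_d+1)^{s_d}} =\csc y\cot y\,\frac{d}{dy}\int_0^y\theta_{s_1}\circ\cdots\circ\theta_{s_d}\circ a_n(\sin t)\sin t\tan t\,dt, \] \[ \sum_{n_1\ge\cdots\ge n_d\ge n}\frac{a_{n_1}(\sin y)}{(2n_1+1)^{s_1}\cdots(2n_d+1)^{s_d}} =\cot y\,\frac{d}{dy}\int_0^y q_{s_1}\circ\cdots\circ q_{s_d}\circ a_n(\sin t)\tan t\,dt, \] where for $y=\pm\pi/2$ the right-hand sides are understood as limits $y\to\pm\pi/2$.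
   Context: $\mathbb{N}=\{1,2,\dots\}$. Set $a_0(x)=1$ and $a_n(x)=\frac{1}{4^n}\binom{2n}{n}x^{2n}$ for $n\ge1$. Iterated integral notation: $\int_0^y f_1(t)dt\circ\cdots\circ f_r(t)dt:=\int_{y>t_1>\cdots>t_r>0}f_1(t_1)\cdots f_r(t_r)\,dt_1\cdots dt_r$ ($\circ$ may be omitted); $(\omega)^k$ is $\omega$ repeated $k$ times. Words mixing functions and 1-forms are expanded by linearity with the rule: for functions $F,G$ and 1-forms $f\,dt,g\,dt$, $[F+f\,dt\circ G]\circ g\,dt:=Fg\,dt+f\,dt\circ(Gg)\,dt$ (a function after $\circ$ multiplies the following 1-form). For $s\in\mathbb{N}$: $\theta_s(t):=\tan t\,dt\,(\cot t\,dt)^{s-1}\,(1-dt\circ\csc t\sec t)$ and $q_s(t):=\sec t\,dt\,(\cot t\,dt)^{s-1}\,(\csc t-dt\circ\sec t)$. *)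

(* Defs.v *)
From Stdlib Require Import Reals List Arith.
From Coquelicot Require Import Coquelicot.
Import ListNotations.
Open Scope R_scope.

Definition a (n : nat) (x : R) : R :=
  Stdlib.Reals.Binomial.C (2 * n)%nat n / 4 ^ n * x ^ (2 * n)%nat.

Definition csc (t : R) : R := / sin t.
Definition sec (t : R) : R := / cos t.
Definition cot (t : R) : R := cos t / sin t.

(* A word whose first letter is a
   1-form is represented by its "integrand" K : R -> R, i.e. the function such
   that  int_0^y (word) = RInt K 0 y.
   - prefixing a 1-form f dt to a word with integrand K gives the integrand
       t |-> f t * int_0^t K ;
   - prefixing a function G (which multiplies the following 1-form) gives
       t |-> G t * K t.
   Linear combinations of words correspond to linear combinations of
   integrands. *)
Definition Form (f : R -> R) (K : R -> R) : R -> R :=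
  fun t => f t * RInt K 0 t.
Definition Mul (G : R -> R) (K : R -> R) : R -> R :=
  fun t => G t * K t.

(* theta_s = tan t dt (cot t dt)^(s-1) (1 - dt o csc t sec t) *)
Definition theta (s : nat) (K : R -> R) : R -> R :=
  Form tan (Nat.iter (s - 1) (Form cot)
    (fun t => K t - Form (fun _ => 1) (Mul (fun u => csc u * sec u) K) t)).

(* q_s = sec t dt (cot t dt)^(s-1) (csc t - dt o sec t) *)
Definition qw (s : nat) (K : R -> R) : R -> R :=
  Form sec (Nat.iter (s - 1) (Form cot)
    (fun t => Mul csc K t - Form (fun _ => 1) (Mul sec K) t)).

Definition RHS1 (n : nat) (s : list nat) (y : R) : R :=
  csc y * cot y *
  Derive (fun z => RInt (fold_right theta
                          (fun t => a n (sin t) * sin t * tan t) s) 0 z) y.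

Definition RHS2 (n : nat) (s : list nat) (y : R) : R :=
  cot y *
  Derive (fun z => RInt (fold_right qw
                          (fun t => a n (sin t) * tan t) s) 0 z) y.

(* Finite truncations of the multiple sums.
   tailsum strict r prev m = sum over prev > k_2 > ... > k_d > m (strict)
   or prev >= k_2 >= ... >= k_d >= m (non-strict) of prod 1/(2k_i+1)^(s_i),
   where r = [s_2; ...; s_d]. *)
Fixpoint tailsum (strict : bool) (r : list nat) (prev m : nat) : R :=
  match r with
  | [] => if strict then (if Nat.ltb m prev then 1 else 0)
          else (if Nat.leb m prev then 1 else 0)
  | s :: r' =>
      fold_right Rplus 0
        (map (fun k => / (INR (2 * k + 1)%nat ^ s) * tailsum strict r' k m)
             (seq 0 (if strict then prev else S prev)))
  end.

Definition trunc (strict : bool) (s : list nat) (n : nat) (x : R) (N : nat) : R :=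
  match s with
  | [] => 0
  | s1 :: r =>
      fold_right Rplus 0
        (map (fun k => a k x / (INR (2 * k + 1)%nat ^ s1) * tailsum strict r k n)
             (seq 0 (S N)))
  end.

(* The multiple sums (nonnegative terms: limit of truncations) *)
Definition msum (strict : bool) (s : list nat) (n : nat) (x : R) : R :=
  real (Lim_seq (trunc strict s n x)).

(* Main.v *)
Require Import Defs.
From Stdlib Require Import Reals List Arith Lra Lia Psatz.
From Coquelicot Require Import Coquelicot.
Import ListNotations.
Open Scope R_scope.

Definition al (m : nat) : R := a m 1.

Lemma a_al m x : a m x = al m * x ^ (2 * m).
Proof. unfold al, a. rewrite pow1. ring. Qed.

Lemma al_0 : al 0 = 1.
Proof. unfold al, a, Binomial.C. simpl. lra. Qed.

Lemma al_S m : al (S m) * INR (2 * m + 2) = al m * INR (2 * m + 1).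
Proof.
  unfold al, a, Binomial.C. rewrite !pow1.
  replace (2 * S m)%nat with (S (S (2 * m))) by lia.
  replace (S (S (2 * m)) - S m)%nat with (S m) by lia.
  replace (2 * m - m)%nat with m by lia.
  rewrite !fact_simpl. rewrite !mult_INR.
  replace (2 * m + 1)%nat with (S (2*m)) by lia. replace (2*m+2)%nat with (S (S (2*m))) by lia.
  rewrite !S_INR, !mult_INR. simpl pow.
  assert (H1 : INR (fact m) <> 0) by (apply not_0_INR; apply fact_neq_0).
  assert (H2 : INR (fact (2*m)) <> 0) by (apply not_0_INR; apply fact_neq_0).
  assert (H3 : 4 ^ m <> 0) by (apply pow_nonzero; lra).
  assert (H4 : 0 <= INR m) by apply pos_INR.
  replace (INR 2) with 2 by (simpl; lra). field. repeat split; try lra; auto.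
Qed.

Lemma al_pos m : 0 < al m.
Proof.
  unfold al, a, Binomial.C. rewrite pow1.
  assert (0 < INR (fact (2*m))) by (apply lt_0_INR; apply lt_O_fact).
  assert (0 < INR (fact m)) by (apply lt_0_INR; apply lt_O_fact).
  assert (0 < INR (fact (2*m - m))) by (apply lt_0_INR; apply lt_O_fact).
  assert (0 < 4 ^ m) by (apply pow_lt; lra).
  apply Rmult_lt_0_compat; [|lra]. apply Rmult_lt_0_compat; [|apply Rinv_0_lt_compat; auto].
  apply Rmult_lt_0_compat; auto. apply Rinv_0_lt_compat. apply Rmult_lt_0_compat; auto.
Qed.
Fixpoint ssum (f : nat -> R) (M : nat) : R :=
  match M with O => 0 | S k => ssum f k + f k end.

Lemma ssum_ext f g M : (forall k, (k < M)%nat -> f k = g k) -> ssum f M = ssum g M.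
Proof. induction M; simpl; intros; auto. rewrite IHM by (intros; apply H; lia). rewrite H by lia. auto. Qed.

Lemma ssum_le f g M : (forall k, (k < M)%nat -> f k <= g k) -> ssum f M <= ssum g M.
Proof. induction M; simpl; intros; [lra|]. assert (ssum f M <= ssum g M) by (apply IHM; intros; apply H; lia).
  assert (f M <= g M) by (apply H; lia). lra. Qed.

Lemma ssum_nonneg f M : (forall k, 0 <= f k) -> 0 <= ssum f M.
Proof. induction M; simpl; intros; [lra|]. specialize (IHM H). specialize (H M). lra. Qed.

Lemma ssum_mono f M N : (forall k, 0 <= f k) -> (M <= N)%nat -> ssum f M <= ssum f N.
Proof. intros Hf HMN. induction HMN; [lra|]. simpl. specialize (Hf m). lra. Qed.

Lemma ssum_shift g m : ssum g (S m) = g O + ssum (fun k => g (S k)) m.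
Proof. induction m. simpl. ring. change (ssum g (S (S m))) with (ssum g (S m) + g (S m)).
  rewrite IHm. simpl. ring. Qed.

Lemma ssum_scal c f M : ssum (fun k => c * f k) M = c * ssum f M.
Proof. induction M; simpl; [ring|]. rewrite IHM. ring. Qed.

Lemma ssum_plus f g M : ssum (fun k => f k + g k) M = ssum f M + ssum g M.
Proof. induction M; simpl; [ring|]. rewrite IHM. ring. Qed.

Lemma fold_ssum f j m : fold_right Rplus 0 (map f (seq j m)) = ssum (fun k => f (j + k)%nat) m.
Proof.
  revert j. induction m; intros j; [reflexivity|].
  cbn [seq map fold_right]. rewrite IHm. rewrite (ssum_shift (fun k => f (j + k)%nat)). rewrite Nat.add_0_r.
  f_equal. apply ssum_ext. intros. f_equal. lia.
Qed.

Definition ev (f : nat -> R) (j : nat) : R :=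
  if Nat.even j then f (Nat.div2 j) else 0.

Lemma ev_even f m : ev f (2 * m) = f m.
Proof. unfold ev. rewrite Nat.even_mul, Nat.div2_double. reflexivity. Qed.

Lemma ev_odd f m : ev f (S (2 * m)) = 0.
Proof. unfold ev. rewrite Nat.even_succ, Nat.odd_mul. simpl. auto. Qed.

Lemma nat_parity (j : nat) : exists m, j = (2 * m)%nat \/ j = S (2 * m).
Proof. destruct (Nat.Even_or_Odd j) as [[m Hm]|[m Hm]]; exists m; lia. Qed.

Definition divS (p : nat -> R) : nat -> R := PS_decr_1 (PS_Int p).

Lemma divS_eq p n : divS p n = p n / INR (S n).
Proof. reflexivity. Qed.

Lemma iter_divS_ev k f n :
  Nat.iter k divS (ev f) n = ev (fun m => f m / INR (2 * m + 1) ^ k) n.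
Proof.
  revert n. induction k; intros n.
  - simpl. unfold ev. destruct (Nat.even n); auto. field.
  - simpl Nat.iter. rewrite divS_eq, IHk.
    destruct (nat_parity n) as [m [-> | ->]].
    + rewrite !ev_even. replace (S (2 * m)) with (2 * m + 1)%nat by lia. rewrite <- tech_pow_Rmult.
      assert (INR (2*m+1) <> 0) by (apply not_0_INR; lia).
      assert (INR (2*m+1) ^ k <> 0) by (apply pow_nonzero; auto). field. auto.
    + rewrite !ev_odd. unfold Rdiv. ring.
Qed.

Definition cc (b : bool) (n : nat) (s : list nat) (m : nat) : R :=
  match s with
  | [] => if Nat.eqb m n then 1 else 0
  | s1 :: r => tailsum b r m n / INR (2 * m + 1) ^ s1
  end.

Definition gam b n s := ev (fun m => al m * cc b n s m).

Lemma ssum_ind n m : ssum (fun k => if Nat.eqb k n then 1 else 0) m = if Nat.ltb n m then 1 else 0.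
Proof.
  induction m; simpl; auto. rewrite IHm.
  destruct (Nat.ltb_spec n m); destruct (Nat.eqb_spec m n); destruct (Nat.ltb_spec n (S m)); try lia; lra.
Qed.

Lemma cc_sum_strict n r m : ssum (cc true n r) m = tailsum true r m n.
Proof.
  destruct r as [|s r'].
  - unfold cc, tailsum. apply ssum_ind.
  - change (tailsum true (s :: r') m n) with (fold_right Rplus 0 (map (fun k => / (INR (2 * k + 1)%nat ^ s) * tailsum true r' k n) (seq 0 m))).
    rewrite fold_ssum. apply ssum_ext. intros. simpl. unfold Rdiv. ring.
Qed.

Lemma cc_sum_ns n r m : ssum (cc false n r) (S m) = tailsum false r m n.
Proof.
  destruct r as [|s r'].
  - unfold cc, tailsum. rewrite ssum_ind. destruct (Nat.ltb_spec n (S m)); destruct (Nat.leb_spec n m); try lia; lra.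
  - change (tailsum false (s :: r') m n) with (fold_right Rplus 0 (map (fun k => / (INR (2 * k + 1)%nat ^ s) * tailsum false r' k n) (seq 0 (S m)))).
    rewrite fold_ssum. apply ssum_ext. intros. simpl. unfold Rdiv. ring.
Qed.
Definition Hh (m : nat) : R := ssum (fun k => / INR (2 * k + 1)) (S m).

Lemma inv_INR_pos k : 0 < / INR (2 * k + 1).
Proof. apply Rinv_0_lt_compat. apply lt_0_INR. lia. Qed.

Lemma inv_INR_le1 k : / INR (2 * k + 1) <= 1.
Proof. assert (1 <= INR (2*k+1)) by (apply (le_INR 1); lia). rewrite <- Rinv_1. apply Rinv_le_contravar; lra. Qed.

Lemma Hh_ge1 m : 1 <= Hh m.
Proof. unfold Hh. rewrite ssum_shift. assert (E: / INR (2*0+1) = 1) by (simpl; apply Rinv_1). rewrite E.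
  assert (0 <= ssum (fun k => / INR (2 * S k + 1)) m) by (apply ssum_nonneg; intros; left; apply inv_INR_pos). lra. Qed.

Lemma Hh_mono m m' : (m <= m')%nat -> Hh m <= Hh m'.
Proof. intros. unfold Hh. apply ssum_mono; [intros; left; apply inv_INR_pos| lia]. Qed.

Lemma inv_pow_le x s : 1 <= x -> (1 <= s)%nat -> / x ^ s <= / x.
Proof.
  intros Hx Hs. destruct s; [lia|]. rewrite <- tech_pow_Rmult.
  assert (1 <= x ^ s) by (apply pow_R1_Rle; auto).
  apply Rinv_le_contravar; [lra|]. nra.
Qed.

Lemma tailsum_nonneg b r m n : 0 <= tailsum b r m n.
Proof.
  revert m. induction r as [|s r IH]; intros m.
  - unfold tailsum. destruct b; [destruct (Nat.ltb n m)|destruct (Nat.leb n m)]; lra.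
  - change (tailsum b (s :: r) m n) with (fold_right Rplus 0 (map (fun k => / (INR (2 * k + 1)%nat ^ s) * tailsum b r k n) (seq 0 (if b then m else S m)))).
    rewrite fold_ssum. apply ssum_nonneg. intros k. apply Rmult_le_pos; auto.
    left. apply Rinv_0_lt_compat. apply pow_lt. apply lt_0_INR. lia.
Qed.

Lemma tailsum_bound b r m n : List.Forall (fun k => (1 <= k)%nat) r -> tailsum b r m n <= Hh m ^ length r.
Proof.
  revert m. induction r as [|s r IH]; intros m Hf.
  - unfold tailsum. simpl. destruct b; [destruct (Nat.ltb n m)|destruct (Nat.leb n m)]; lra.
  - inversion Hf; subst.
    change (tailsum b (s :: r) m n) with (fold_right Rplus 0 (map (fun k => / (INR (2 * k + 1)%nat ^ s) * tailsum b r k n) (seq 0 (if b then m else S m)))).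
    rewrite fold_ssum. simpl length.
    apply Rle_trans with (ssum (fun k => / (INR (2 * k + 1)%nat ^ s) * tailsum b r k n) (S m)).
    { apply ssum_mono. intros k. apply Rmult_le_pos; [|apply tailsum_nonneg].
      left. apply Rinv_0_lt_compat. apply pow_lt. apply lt_0_INR. lia. destruct b; lia. }
    apply Rle_trans with (ssum (fun k => / INR (2 * k + 1) * Hh m ^ length r) (S m)).
    { apply ssum_le. intros k Hk. apply Rmult_le_compat.
      - left. apply Rinv_0_lt_compat. apply pow_lt. apply lt_0_INR. lia.
      - apply tailsum_nonneg.
      - apply inv_pow_le; auto. apply (le_INR 1); lia.
      - apply Rle_trans with (Hh k ^ length r); auto. apply pow_incr. split.
        + pose proof (Hh_ge1 k); lra.
        + apply Hh_mono; lia. }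
    rewrite (ssum_ext _ (fun k => Hh m ^ length r * / INR (2 * k + 1))) by (intros; ring).
    rewrite ssum_scal. change (ssum (fun k => / INR (2 * k + 1)) (S m)) with (Hh m). simpl. right; ring.
Qed.

Lemma pow_diff a b p : 0 <= b <= a -> a ^ S p - b ^ S p <= INR (S p) * a ^ p * (a - b).
Proof.
  intros [Hb Hab]. induction p.
  - simpl. lra.
  - assert (b ^ S p <= a ^ S p) by (apply pow_incr; lra).
    assert (0 <= b ^ p) by (apply pow_le; lra).
    assert (b * a ^ p <= a ^ S p) by (simpl; apply Rmult_le_compat_r; [apply pow_le; lra| lra]).
    replace (a ^ S (S p) - b ^ S (S p)) with (a ^ S p * (a - b) + b * (a ^ S p - b ^ S p)) by (simpl; ring).
    rewrite S_INR.
    assert (b * (a ^ S p - b ^ S p) <= b * (INR (S p) * a ^ p * (a - b))) by (apply Rmult_le_compat_l; auto).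
    assert (b * (INR (S p) * a ^ p * (a - b)) <= INR (S p) * a ^ S p * (a - b)).
    { replace (b * (INR (S p) * a ^ p * (a - b))) with (INR (S p) * (a - b) * (b * a ^ p)) by ring.
      replace (INR (S p) * a ^ S p * (a - b)) with (INR (S p) * (a - b) * a ^ S p) by ring.
      apply Rmult_le_compat_l; auto. apply Rmult_le_pos; [apply pos_INR|lra]. }
    lra.
Qed.

Lemma al_diff m : al m - al (S m) = al m / INR (2 * m + 2).
Proof.
  pose proof (al_S m). assert (INR (2*m+2) <> 0) by (apply not_0_INR; lia).
  apply (Rmult_eq_reg_r (INR (2*m+2))); auto. field_simplify; auto.
  rewrite H. rewrite !plus_INR, !mult_INR. simpl. ring.
Qed.

Lemma al_term_le m : al m / INR (2 * m + 1) <= 2 * (al m - al (S m)).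
Proof.
  rewrite al_diff. pose proof (al_pos m) as Ha.
  assert (Hp: 0 < INR (2*m+1)) by (apply lt_0_INR; lia).
  assert (Hq: INR (2*m+2) = INR (2*m+1) + 1) by (rewrite !plus_INR; simpl; ring).
  rewrite Hq. unfold Rdiv. apply Rmult_le_reg_r with (INR (2 * m + 1) * (INR (2 * m + 1) + 1)).
  nra. field_simplify; try lra. assert (1 <= INR (2*m+1)) by (apply (le_INR 1); lia). nra.
Qed.

Lemma sbp (w : nat -> R) M :
  ssum (fun m => (al m - al (S m)) * w m) M + al M * w M =
  al O * w O + ssum (fun m => al (S m) * (w (S m) - w m)) M.
Proof. induction M; simpl; [ring|]. lra. Qed.

Lemma Bp p : exists B, forall M, ssum (fun m => al m / INR (2 * m + 1) * Hh m ^ p) M <= B.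
Proof.
  induction p as [|p [B HB]].
  - exists 2. intros M.
    apply Rle_trans with (ssum (fun m => 2 * ((al m - al (S m)) * 1)) M).
    { apply ssum_le. intros. simpl. rewrite !Rmult_1_r. apply al_term_le. }
    rewrite ssum_scal. pose proof (sbp (fun _ => 1) M) as E0.
    rewrite (ssum_ext (fun m => al (S m) * (1 - 1)) (fun _ => 0 * 0)) in E0 by (intros; ring).
    rewrite ssum_scal in E0. rewrite al_0 in E0. pose proof (al_pos M). lra.
  - exists (2 * (1 + INR (S p) * B)). intros M.
    apply Rle_trans with (ssum (fun m => 2 * ((al m - al (S m)) * Hh m ^ S p)) M).
    { apply ssum_le. intros. pose proof (al_term_le k).
      assert (0 <= Hh k ^ S p) by (apply pow_le; pose proof (Hh_ge1 k); lra). nra. }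
    rewrite ssum_scal. pose proof (sbp (fun m => Hh m ^ S p) M) as E.
    assert (E1: 0 <= al M * Hh M ^ S p) by (apply Rmult_le_pos; [left; apply al_pos| apply pow_le; pose proof (Hh_ge1 M); lra]).
    assert (Hs : ssum (fun m => al (S m) * (Hh (S m) ^ S p - Hh m ^ S p)) M <= INR (S p) * B).
    { apply Rle_trans with (ssum (fun m => INR (S p) * (al (S m) / INR (2 * S m + 1) * Hh (S m) ^ p)) M).
      - apply ssum_le. intros k _.
        assert (Hd : Hh (S k) - Hh k = / INR (2 * S k + 1)) by (unfold Hh; simpl; ring).
        pose proof (pow_diff (Hh (S k)) (Hh k) p) as Pd.
        assert (Hk0 : 0 <= Hh k <= Hh (S k)) by (split; [pose proof (Hh_ge1 k); lra| apply Hh_mono; lia]).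
        specialize (Pd Hk0). rewrite Hd in Pd. pose proof (al_pos (S k)).
        unfold Rdiv. replace (INR (S p) * (al (S k) * / INR (2 * S k + 1) * Hh (S k) ^ p)) with (al (S k) * (INR (S p) * Hh (S k) ^ p * / INR (2 * S k + 1))) by ring.
        apply Rmult_le_compat_l; lra.
      - rewrite ssum_scal. apply Rmult_le_compat_l; [apply pos_INR|].
        apply Rle_trans with (ssum (fun m => al m / INR (2 * m + 1) * Hh m ^ p) (S M)); auto.
        rewrite ssum_shift. 
        assert (0 <= al 0 / INR (2 * 0 + 1) * Hh 0 ^ p).
        { apply Rmult_le_pos; [|apply pow_le; pose proof (Hh_ge1 0); lra]. unfold Rdiv. apply Rmult_le_pos; [left; apply al_pos| left; apply inv_INR_pos]. }
        lra. }
    rewrite al_0 in E. assert (E2: Hh 0 = 1) by (unfold Hh; simpl; field). rewrite E2, pow1 in E. lra.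
Qed.
Lemma cc_nonneg b n s k : 0 <= cc b n s k.
Proof.
  destruct s as [|s1 r]; simpl.
  - destruct (Nat.eqb k n); lra.
  - unfold Rdiv. apply Rmult_le_pos; [apply tailsum_nonneg|]. left. apply Rinv_0_lt_compat. apply pow_lt. apply lt_0_INR. lia.
Qed.

Lemma coef_bound b n s : List.Forall (fun k => (1 <= k)%nat) s ->
  exists B, forall M, ssum (fun k => al k * cc b n s k) M <= B.
Proof.
  intros Hf. destruct s as [|s1 r].
  - exists (al n). intros M. simpl.
    rewrite (ssum_ext _ (fun k => al n * (if Nat.eqb k n then 1 else 0))).
    + rewrite ssum_scal, ssum_ind. pose proof (al_pos n). destruct (Nat.ltb n M); nra.
    + intros k _. destruct (Nat.eqb_spec k n); subst; ring.
  - inversion Hf; subst. destruct (Bp (length r)) as [B HB]. exists B. intros M.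
    apply Rle_trans with (ssum (fun m => al m / INR (2 * m + 1) * Hh m ^ length r) M); auto.
    apply ssum_le. intros k _. unfold cc.
    pose proof (al_pos k). pose proof (tailsum_bound b r k n H2).
    pose proof (tailsum_nonneg b r k n).
    assert (Hi : / INR (2 * k + 1) ^ s1 <= / INR (2 * k + 1)) by (apply inv_pow_le; auto; apply (le_INR 1); lia).
    assert (0 < / INR (2 * k + 1) ^ s1) by (apply Rinv_0_lt_compat; apply pow_lt; apply lt_0_INR; lia).
    unfold Rdiv. replace (al k * (tailsum b r k n * / INR (2 * k + 1) ^ s1)) with (al k * (/ INR (2 * k + 1) ^ s1 * tailsum b r k n)) by ring.
    rewrite Rmult_assoc. apply Rmult_le_compat_l; [lra|].
    apply Rmult_le_compat; auto; lra.
Qed.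

Lemma sum_n_ssum (g : nat -> R) N : sum_n g N = ssum g (S N).
Proof. induction N. rewrite sum_O. simpl. ring. rewrite sum_Sn, IHN. reflexivity. Qed.

Lemma ssum_ev f x M : ssum (fun j => ev f j * x ^ j) (2 * M) = ssum (fun k => f k * x ^ (2 * k)) M.
Proof.
  induction M. reflexivity.
  replace (2 * S M)%nat with (S (S (2 * M))) by lia.
  change (ssum (fun j => ev f j * x ^ j) (S (S (2 * M)))) with
    (ssum (fun j => ev f j * x ^ j) (2 * M) + ev f (2 * M) * x ^ (2 * M) + ev f (S (2 * M)) * x ^ (S (2 * M))).
  rewrite IHM, ev_even, ev_odd. rewrite Rmult_0_l, Rplus_0_r. reflexivity.
Qed.

Lemma ev_nonneg f j : (forall k, 0 <= f k) -> 0 <= ev f j.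
Proof. intros. unfold ev. destruct (Nat.even j); auto. lra. Qed.

Lemma ev_ser (f : nat -> R) B : (forall k, 0 <= f k) -> (forall M, ssum f M <= B) ->
  CV_disk (ev f) 1 /\ Rbar_le 1 (CV_radius (ev f)).
Proof.
  intros Hf HB.
  assert (Hs : forall j, ssum (ev f) j <= B).
  { intros j. apply Rle_trans with (ssum (ev f) (2 * j)).
    - apply ssum_mono; [intros; apply ev_nonneg; auto| lia].
    - rewrite (ssum_ext _ (fun j => ev f j * 1 ^ j)) by (intros; rewrite pow1; ring).
      rewrite ssum_ev. rewrite (ssum_ext _ f) by (intros; rewrite pow1; ring). auto. }
  split.
  - unfold CV_disk. apply ex_series_ext with (ev f).
    { intros k. rewrite pow1, Rmult_1_r, Rabs_pos_eq; auto. apply ev_nonneg; auto. }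
    destruct (ex_finite_lim_seq_incr (sum_n (ev f)) B) as [l Hl].
    + intros k. rewrite !sum_n_ssum. simpl. pose proof (ev_nonneg f (S k) Hf). lra.
    + intros k. rewrite sum_n_ssum. auto.
    + exists l. exact Hl.
  - destruct (CV_radius_bounded (ev f)) as [Hub _]. apply Hub.
    exists B. intros k. rewrite pow1, Rmult_1_r, Rabs_pos_eq by (apply ev_nonneg; auto).
    apply Rle_trans with (ssum (ev f) (S k)); auto. simpl.
    pose proof (ssum_nonneg (ev f) k (fun j => ev_nonneg f j Hf)). lra.
Qed.

Lemma lim_trunc f x : ex_pseries (ev f) x ->
  is_lim_seq (fun N => ssum (fun k => f k * x ^ (2 * k)) (S N)) (PSeries (ev f) x).
Proof.
  intros Hx. apply ex_pseries_R in Hx.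
  pose proof (Series_correct _ Hx) as Hc.
  assert (Hl : is_lim_seq (sum_n (fun n => ev f n * x ^ n)) (PSeries (ev f) x)) by exact Hc.
  apply is_lim_seq_subseq with (phi := fun N => S (2 * N)) in Hl.
  - eapply is_lim_seq_ext; [|exact Hl]. intros N.
    cbv beta. rewrite sum_n_ssum. replace (S (S (2 * N))) with (2 * S N)%nat by lia. apply ssum_ev.
  - apply eventually_subseq. intros; lia.
Qed.
Ltac toR := match goal with |- ?x = ?y => change (@eq R x y) end.

Definition inI (t : R) : Prop := - PI / 2 < t < PI / 2.

Lemma cos_pos_I t : inI t -> 0 < cos t.
Proof. intros [H1 H2]. apply cos_gt_0; lra. Qed.

Lemma sin_abs_I t : inI t -> Rabs (sin t) < 1.
Proof.
  intros Ht. pose proof (cos_pos_I t Ht). pose proof (sin2_cos2 t). unfold Rsqr in H0.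
  apply Rabs_def1; nra.
Qed.

Lemma sin_neq0 t : inI t -> t <> 0 -> sin t <> 0.
Proof.
  intros [H1 H2] H0. pose proof PI_RGT_0.
  destruct (Rlt_or_le 0 t).
  - apply Rgt_not_eq. apply sin_gt_0; lra.
  - assert (t < 0) by lra. rewrite <- (Ropp_involutive t). rewrite sin_neg.
    assert (0 < sin (- t)) by (apply sin_gt_0; lra). lra.
Qed.

Lemma rad_lt a x : Rbar_le 1 (CV_radius a) -> Rabs x < 1 -> Rbar_lt (Rabs x) (CV_radius a).
Proof. intros H1 H2. destruct (CV_radius a) as [r| |]; simpl in *; auto; lra. Qed.

Lemma inI_seg t u : inI t -> Rmin 0 t <= u <= Rmax 0 t -> inI u.
Proof. unfold inI, Rmin, Rmax. intros Ht Hu. pose proof PI_RGT_0. destruct (Rle_dec 0 t); lra. Qed.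

Lemma ftc_I (F f X : R -> R) t :
  inI t -> (forall u, inI u -> is_derive F u (f u)) -> (forall u, inI u -> continuous f u) ->
  (forall u, inI u -> u <> 0 -> X u = f u) -> RInt X 0 t = F t - F 0.
Proof.
  intros Ht HD HC HX.
  rewrite (RInt_ext X f).
  - apply is_RInt_unique. apply (is_RInt_derive F f 0 t).
    + intros u Hu. apply HD. apply (inI_seg t); auto.
    + intros u Hu. apply HC. apply (inI_seg t); auto.
  - intros u Hu. apply HX.
    + apply (inI_seg t); [auto| lra].
    + unfold Rmin, Rmax in Hu. destruct (Rle_dec 0 t); lra.
Qed.

Lemma exd_cont (f : R -> R) x : ex_derive f x -> continuous f x.
Proof. intros H. exact (@ex_derive_continuous R_AbsRing R_NormedModule f x H). Qed.

Lemma Dps a y : Rbar_lt (Rabs y) (CV_radius a) -> Derive (fun x => PSeries a x) y = PSeries (PS_derive a) y.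
Proof. intros. apply Derive_PSeries; auto. Qed.

Lemma exd_ps a y : Rbar_lt (Rabs y) (CV_radius a) -> ex_derive (fun x => PSeries a x) y.
Proof. intros. apply ex_derive_PSeries; auto. Qed.

Definition divS_PS_derive_Int p n : PS_derive (PS_Int p) n = p n.
Proof. unfold PS_derive, PS_Int. field. apply not_0_INR. lia. Qed.

Lemma rad_divS p : CV_radius (divS p) = CV_radius p.
Proof. unfold divS. rewrite CV_radius_decr_1, CV_radius_Int. auto. Qed.

Lemma rad_iter_divS k p : CV_radius (Nat.iter k divS p) = CV_radius p.
Proof. induction k; simpl; auto. rewrite rad_divS. auto. Qed.

Lemma int_cosP p X t : Rbar_le 1 (CV_radius p) ->
  (forall u, inI u -> u <> 0 -> X u = cos u * PSeries p (sin u)) -> inI t ->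
  RInt X 0 t = sin t * PSeries (divS p) (sin t).
Proof.
  intros Hr HX Ht.
  assert (HrI : Rbar_le 1 (CV_radius (PS_Int p))) by (rewrite CV_radius_Int; auto).
  rewrite (ftc_I (fun u => PSeries (PS_Int p) (sin u)) (fun u => cos u * PSeries p (sin u)) X t Ht).
  - rewrite sin_0, PSeries_0. simpl PS_Int.
    rewrite PSeries_decr_1. simpl PS_Int. unfold divS. toR. ring.
    apply CV_radius_inside. apply rad_lt; auto. apply sin_abs_I; auto.
  - intros u Hu. pose proof (sin_abs_I u Hu).
    auto_derive. apply exd_ps. apply rad_lt; auto.
    rewrite Dps by (apply rad_lt; auto). rewrite (PSeries_ext _ p) by apply divS_PS_derive_Int. ring.
  - intros u Hu. pose proof (sin_abs_I u Hu). apply exd_cont.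
    auto_derive. apply exd_ps. apply rad_lt; auto.
  - auto.
Qed.
Lemma PSplus_R (a b : nat -> R) n : PS_plus a b n = a n + b n.
Proof. reflexivity. Qed.
Lemma PSincr0 (a : nat -> R) : PS_incr_1 a 0 = 0.
Proof. reflexivity. Qed.
Lemma PSincrS (a : nat -> R) n : PS_incr_1 a (S n) = a n.
Proof. reflexivity. Qed.

Lemma exps a x : Rbar_le 1 (CV_radius a) -> Rabs x < 1 -> ex_pseries a x.
Proof. intros. apply CV_radius_inside. apply rad_lt; auto. Qed.

Lemma rad_plus a b : Rbar_le 1 (CV_radius a) -> Rbar_le 1 (CV_radius b) -> Rbar_le 1 (CV_radius (PS_plus a b)).
Proof.
  intros Ha Hb. eapply Rbar_le_trans; [|apply CV_radius_plus].
  apply Rbar_min_case; auto.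
Qed.

Lemma rad_incr (a : nat -> R) : Rbar_le 1 (CV_radius a) -> Rbar_le 1 (CV_radius (PS_incr_1 a)).
Proof. rewrite CV_radius_incr_1. auto. Qed.

Lemma rad_der (a : nat -> R) : Rbar_le 1 (CV_radius a) -> Rbar_le 1 (CV_radius (PS_derive a)).
Proof. rewrite CV_radius_derive. auto. Qed.

Section W.
Variable c : nat -> R.
Let gm := ev (fun m => al m * c m).
Let ep := ev (fun m => al m * ssum c m).

Lemma key_coef j :
  PS_derive ep j =
  PS_plus (PS_plus (PS_incr_1 gm) (PS_incr_1 ep))
          (PS_plus (PS_incr_1 (PS_incr_1 (PS_derive gm))) (PS_incr_1 (PS_incr_1 (PS_derive ep)))) j.
Proof.
  rewrite !PSplus_R. unfold PS_derive.
  destruct j as [|[|k]].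
  - rewrite !PSincr0. unfold ep, ev. simpl. toR. simpl. lra.
  - rewrite !PSincrS, !PSincr0.
    change (ep (S 1)) with (ev (fun m => al m * ssum c m) (2 * 1)).
    change (gm 0) with (ev (fun m => al m * c m) (2 * 0)).
    change (ep 0) with (ev (fun m => al m * ssum c m) (2 * 0)).
    rewrite !ev_even. simpl ssum. pose proof (al_S 0) as E. simpl in E. simpl INR.
    toR. nra.
  - rewrite !PSincrS.
    destruct (nat_parity k) as [m [-> | ->]].
    + replace (S (S (S (2 * m)))) with (S (2 * (S m))) by lia.
      unfold ep, gm. rewrite !ev_odd. toR. ring.
    + assert (I1 : S (S (S (S (2*m)))) = (2 * S (S m))%nat) by lia.
      assert (I2 : S (S (2 * m)) = (2 * S m)%nat) by lia.
      rewrite I1, I2. unfold ep, gm. rewrite !ev_even.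
      pose proof (al_S (S m)) as E.
      replace (INR (2 * S m + 2)) with (INR (2 * S (S m))) in E by (f_equal; lia).
      replace (INR (2 * S m + 1)) with (INR (2 * S m) + 1) in E by (rewrite <- S_INR; f_equal; lia).
      change (ssum c (S (S m))) with (ssum c (S m) + c (S m)).
      toR. transitivity (al (S (S m)) * INR (2 * S (S m)) * (ssum c (S m) + c (S m))). ring.
      rewrite E. ring.
Qed.

Lemma key_id x : Rbar_le 1 (CV_radius gm) -> Rbar_le 1 (CV_radius ep) -> Rabs x < 1 ->
  PSeries (PS_derive ep) x = x * (PSeries gm x + PSeries ep x) + x ^ 2 * (PSeries (PS_derive gm) x + PSeries (PS_derive ep) x).
Proof.
  intros Hg He Hx.
  etransitivity; [apply PSeries_ext; apply key_coef|].
  assert (G1 : Rbar_le 1 (CV_radius (PS_derive gm))) by (apply rad_der; auto).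
  assert (E1 : Rbar_le 1 (CV_radius (PS_derive ep))) by (apply rad_der; auto).
  rewrite PSeries_plus; [| apply exps; auto; apply rad_plus; apply rad_incr; auto | apply exps; auto; apply rad_plus; apply rad_incr; apply rad_incr; auto].
  rewrite PSeries_plus; [| apply exps; auto; apply rad_incr; auto | apply exps; auto; apply rad_incr; auto].
  rewrite PSeries_plus; [| apply exps; auto; apply rad_incr; apply rad_incr; auto | apply exps; auto; apply rad_incr; apply rad_incr; auto].
  rewrite !PSeries_incr_1. simpl. toR. ring.
Qed.

Lemma W_lem Y t : Rbar_le 1 (CV_radius gm) -> Rbar_le 1 (CV_radius ep) ->
  (forall u, inI u -> u <> 0 -> Y u = sin u * PSeries gm (sin u) / cos u ^ 2) -> inI t ->
  RInt Y 0 t = (sin t ^ 2 * PSeries gm (sin t) - cos t ^ 2 * PSeries ep (sin t)) / cos t.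
Proof.
  intros Hg He HY Ht.
  rewrite (ftc_I (fun u => (sin u ^ 2 * PSeries gm (sin u) - cos u ^ 2 * PSeries ep (sin u)) / cos u)
                 (fun u => sin u * PSeries gm (sin u) / cos u ^ 2) Y t Ht).
  - rewrite sin_0, cos_0, (PSeries_0 ep).
    replace (ep 0%nat) with 0 by (unfold ep, ev; simpl; toR; ring).
    pose proof (cos_pos_I t Ht). toR. field. lra.
  - intros u Hu. pose proof (sin_abs_I u Hu) as Hs. pose proof (cos_pos_I u Hu) as Hc.
    auto_derive.
    { repeat split; try (apply exd_ps; apply rad_lt; auto); lra. }
    rewrite !Dps by (apply rad_lt; auto).
    pose proof (key_id (sin u) Hg He Hs) as K.
    pose proof (sin2_cos2 u) as P. unfold Rsqr in P.
    set (s := sin u) in *. set (co := cos u) in *.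
    set (G := PSeries gm s) in *. set (E := PSeries ep s) in *.
    set (G1 := PSeries (PS_derive gm) s) in *. set (E1 := PSeries (PS_derive ep) s) in *.
    toR. transitivity ((co ^ 2 * (2 * s * G + s ^ 2 * G1 + s * E - co ^ 2 * E1) + s ^ 3 * G) / co ^ 2).
    { field. lra. }
    assert (Hc2 : co ^ 2 = 1 - s ^ 2) by (rewrite <- P; ring).
    assert (K2 : (1 - s ^ 2) * E1 = s * (G + E) + s ^ 2 * G1).
    { replace ((1 - s ^ 2) * E1) with (E1 - s ^ 2 * E1) by ring. rewrite K at 1. ring. }
    assert (Hn : 1 - s ^ 2 <> 0) by (rewrite <- Hc2; apply pow_nonzero; lra).
    rewrite Hc2. rewrite K2. field. auto.
  - intros u Hu. pose proof (sin_abs_I u Hu) as Hs. pose proof (cos_pos_I u Hu) as Hc.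
    apply exd_cont. auto_derive. repeat split; try (apply exd_ps; apply rad_lt; auto).
    apply Rmult_integral_contrapositive; split; [lra|]. rewrite Rmult_1_r; lra.
  - auto.
Qed.
End W.
Definition gmf (c : nat -> R) := ev (fun m => al m * c m).
Definition epf (c : nat -> R) := ev (fun m => al m * ssum c m).

Lemma iter_cot j p X t : Rbar_le 1 (CV_radius p) ->
  (forall u, inI u -> u <> 0 -> X u = cos u * PSeries p (sin u)) -> inI t -> t <> 0 ->
  Nat.iter j (Form cot) X t = cos t * PSeries (Nat.iter j divS p) (sin t).
Proof.
  intros Hr HX. revert t. induction j; intros t Ht Ht0.
  - simpl. auto.
  - simpl Nat.iter at 1. unfold Form.
    rewrite (int_cosP (Nat.iter j divS p)); auto.
    + unfold cot. pose proof (sin_neq0 t Ht Ht0). simpl Nat.iter. toR. field. auto.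
    + rewrite rad_iter_divS. auto.
Qed.

Lemma theta_step c s1 K t : (1 <= s1)%nat ->
  Rbar_le 1 (CV_radius (gmf c)) -> Rbar_le 1 (CV_radius (epf c)) ->
  (forall u, inI u -> u <> 0 -> K u = sin u * tan u * PSeries (gmf c) (sin u)) -> inI t -> t <> 0 ->
  theta s1 K t = sin t * tan t * PSeries (Nat.iter s1 divS (epf c)) (sin t).
Proof.
  intros Hs1 Hg He HK Ht Ht0. destruct s1 as [|j]; [lia|].
  unfold theta. replace (S j - 1)%nat with j by lia. unfold Form at 1.
  rewrite (int_cosP (Nat.iter j divS (epf c))).
  - simpl Nat.iter. unfold tan. toR. ring.
  - rewrite rad_iter_divS; auto.
  - intros u Hu Hu0. apply iter_cot; auto.
    intros v Hv Hv0. unfold Form, Mul.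
    rewrite (W_lem c); auto.
    + rewrite HK; auto. pose proof (cos_pos_I v Hv). unfold tan. unfold gmf, epf. toR. field. lra.
    + intros w Hw Hw0. rewrite HK; auto. pose proof (cos_pos_I w Hw). pose proof (sin_neq0 w Hw Hw0).
      unfold csc, sec, tan, gmf. toR. field. split; lra.
  - auto.
Qed.

Lemma qw_step c s1 K t : (1 <= s1)%nat ->
  Rbar_le 1 (CV_radius (gmf c)) -> Rbar_le 1 (CV_radius (epf c)) ->
  (forall u, inI u -> u <> 0 -> K u = tan u * PSeries (gmf c) (sin u)) -> inI t -> t <> 0 ->
  qw s1 K t = tan t * PSeries (Nat.iter s1 divS (PS_plus (gmf c) (epf c))) (sin t).
Proof.
  intros Hs1 Hg He HK Ht Ht0. destruct s1 as [|j]; [lia|].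
  unfold qw. replace (S j - 1)%nat with j by lia. unfold Form at 1.
  rewrite (int_cosP (Nat.iter j divS (PS_plus (gmf c) (epf c)))).
  - simpl Nat.iter. unfold tan, sec. pose proof (cos_pos_I t Ht). toR. field. lra.
  - rewrite rad_iter_divS; apply rad_plus; auto.
  - intros u Hu Hu0. apply iter_cot; auto.
    + apply rad_plus; auto.
    + intros v Hv Hv0. unfold Form, Mul.
      rewrite (W_lem c); auto.
      * rewrite HK; auto. pose proof (cos_pos_I v Hv). pose proof (sin_neq0 v Hv Hv0).
        pose proof (sin2_cos2 v) as P. unfold Rsqr in P.
        rewrite PSeries_plus by (apply exps; auto; apply sin_abs_I; auto).
        unfold tan, csc. unfold gmf, epf. toR.
        replace (sin v ^ 2) with (1 - cos v ^ 2) by (rewrite <- P; ring).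
        field. split; lra.
      * intros w Hw Hw0. rewrite HK; auto. pose proof (cos_pos_I w Hw).
        unfold sec, tan, gmf. toR. field. lra.
  - auto.
Qed.
Lemma ev_ext f g j : (forall m, f m = g m) -> ev f j = ev g j.
Proof. intros. unfold ev. destruct (Nat.even j); auto. Qed.

Lemma iter_divS_ext k p q : (forall n, p n = q n) -> forall n, Nat.iter k divS p n = Nat.iter k divS q n.
Proof. intros Hpq. induction k; intros n; simpl; auto. rewrite !divS_eq, IHk. auto. Qed.

Lemma gam_conv b n s : List.Forall (fun k => (1 <= k)%nat) s ->
  CV_disk (gam b n s) 1 /\ Rbar_le 1 (CV_radius (gam b n s)).
Proof.
  intros Hf. destruct (coef_bound b n s Hf) as [B HB].
  apply (ev_ser _ B); auto. intros k. apply Rmult_le_pos; [left; apply al_pos| apply cc_nonneg].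
Qed.

Lemma exps_le1 b n s x : List.Forall (fun k => (1 <= k)%nat) s -> Rabs x <= 1 -> ex_pseries (gam b n s) x.
Proof.
  intros Hf Hx. apply CV_disk_correct. apply CV_disk_le with 1.
  - rewrite Rabs_R1. auto.
  - apply gam_conv; auto.
Qed.

Lemma base_ps b n x : Rabs x < 1 -> PSeries (gam b n []) x = a n x.
Proof.
  intros Hx.
  assert (Hex : ex_pseries (gam b n []) x) by (apply exps_le1; [constructor| lra]).
  pose proof (lim_trunc (fun m => al m * cc b n [] m) x Hex) as H1.
  assert (H2 : is_lim_seq (fun N => ssum (fun k => al k * cc b n [] k * x ^ (2 * k)) (S N)) (a n x)).
  { apply is_lim_seq_ext_loc with (fun _ => a n x); [|apply is_lim_seq_const].
    exists n. intros N HN.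
    rewrite (ssum_ext _ (fun k => (al n * x ^ (2 * n)) * (if Nat.eqb k n then 1 else 0))).
    - rewrite ssum_scal, ssum_ind. destruct (Nat.ltb_spec n (S N)); [|lia]. rewrite a_al. toR. ring.
    - intros k _. unfold cc. destruct (Nat.eqb_spec k n); subst; toR; ring. }
  apply is_lim_seq_unique in H1. apply is_lim_seq_unique in H2. rewrite H1 in H2. injection H2. auto.
Qed.

Lemma coef_strict n s1 r j : Nat.iter s1 divS (epf (cc true n r)) j = gam true n (s1 :: r) j.
Proof.
  unfold epf. rewrite iter_divS_ev. unfold gam. apply ev_ext. intros m. rewrite cc_sum_strict.
  unfold cc. unfold Rdiv. toR. ring.
Qed.

Lemma coef_ns n s1 r j : Nat.iter s1 divS (PS_plus (gmf (cc false n r)) (epf (cc false n r))) j = gam false n (s1 :: r) j.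
Proof.
  rewrite (iter_divS_ext s1 _ (ev (fun m => al m * ssum (cc false n r) (S m)))).
  - rewrite iter_divS_ev. unfold gam. apply ev_ext. intros m. rewrite cc_sum_ns.
    unfold cc. unfold Rdiv. toR. ring.
  - intros k. rewrite PSplus_R. unfold gmf, epf, ev. destruct (Nat.even k); simpl; toR; ring.
Qed.

Lemma strict_formula n s : List.Forall (fun k => (1 <= k)%nat) s -> forall t, inI t -> t <> 0 ->
  fold_right theta (fun t => a n (sin t) * sin t * tan t) s t = sin t * tan t * PSeries (gam true n s) (sin t).
Proof.
  induction s as [|s1 r IH]; intros Hf t Ht Ht0.
  - simpl. rewrite base_ps by (apply sin_abs_I; auto). toR. ring.
  - inversion Hf; subst. simpl fold_right.
    rewrite (theta_step (cc true n r) s1 _ t); auto.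
    + f_equal. apply PSeries_ext. apply coef_strict.
    + apply (gam_conv true n r); auto.
    + rewrite <- (rad_iter_divS s1). rewrite (CV_radius_ext _ (gam true n (s1 :: r))) by apply coef_strict.
      apply gam_conv; auto.
Qed.

Lemma ns_formula n s : List.Forall (fun k => (1 <= k)%nat) s -> forall t, inI t -> t <> 0 ->
  fold_right qw (fun t => a n (sin t) * tan t) s t = tan t * PSeries (gam false n s) (sin t).
Proof.
  induction s as [|s1 r IH]; intros Hf t Ht Ht0.
  - simpl. rewrite base_ps by (apply sin_abs_I; auto). toR. ring.
  - inversion Hf; subst. simpl fold_right.
    assert (Hg : Rbar_le 1 (CV_radius (gmf (cc false n r)))) by (apply (gam_conv false n r); auto).
    assert (Hp : Rbar_le 1 (CV_radius (PS_plus (gmf (cc false n r)) (epf (cc false n r))))).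
    { rewrite <- (rad_iter_divS s1). rewrite (CV_radius_ext _ (gam false n (s1 :: r))) by apply coef_ns.
      apply gam_conv; auto. }
    rewrite (qw_step (cc false n r) s1 _ t); auto.
    + f_equal. apply PSeries_ext. apply coef_ns.
    + rewrite (CV_radius_ext _ (PS_plus (PS_plus (gmf (cc false n r)) (epf (cc false n r))) (PS_opp (gmf (cc false n r))))).
      * apply rad_plus; auto. rewrite CV_radius_opp. auto.
      * intros k. rewrite !PSplus_R. unfold PS_opp, opp. simpl. toR. ring.
Qed.
Lemma locally_I y : inI y -> locally y inI.
Proof.
  intros [H1 H2]. apply (locally_interval _ y (Finite (- PI / 2)) (Finite (PI / 2))); simpl; auto.
  intros z Hz1 Hz2. split; auto.
Qed.

Lemma Derive_word (Kw : R -> R) g y : Rbar_le 1 (CV_radius g) -> inI y ->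
  (forall u, inI u -> u <> 0 -> Kw u = sin u * tan u * PSeries g (sin u)) ->
  Derive (fun z => RInt Kw 0 z) y = sin y * tan y * PSeries g (sin y).
Proof.
  intros Hg Hy HK.
  set (Kf := fun u => sin u * tan u * PSeries g (sin u)).
  assert (Hc : forall u, inI u -> continuous Kf u).
  { intros u Hu. pose proof (sin_abs_I u Hu). pose proof (cos_pos_I u Hu). apply exd_cont. unfold Kf, tan.
    auto_derive. repeat split; try (apply exd_ps; apply rad_lt; auto); lra. }
  rewrite (Derive_ext_loc _ (RInt Kf 0)).
  - transitivity (Kf y); [|reflexivity]. apply Derive_RInt.
    + apply filter_imp with inI; [|apply locally_I; auto].
      intros z Hz. apply (@ex_RInt_continuous R_CompleteNormedModule). intros w Hw. apply Hc. apply (inI_seg z); auto.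
    + apply Hc; auto.
  - apply filter_imp with inI; [|apply locally_I; auto].
    intros z Hz. apply RInt_ext. intros u Hu. apply HK.
    + apply (inI_seg z); [auto|lra].
    + unfold Rmin, Rmax in Hu. destruct (Rle_dec 0 z); lra.
Qed.

Lemma Derive_word2 (Kw : R -> R) g y : Rbar_le 1 (CV_radius g) -> inI y ->
  (forall u, inI u -> u <> 0 -> Kw u = tan u * PSeries g (sin u)) ->
  Derive (fun z => RInt Kw 0 z) y = tan y * PSeries g (sin y).
Proof.
  intros Hg Hy HK.
  set (Kf := fun u => tan u * PSeries g (sin u)).
  assert (Hc : forall u, inI u -> continuous Kf u).
  { intros u Hu. pose proof (sin_abs_I u Hu). pose proof (cos_pos_I u Hu). apply exd_cont. unfold Kf, tan.
    auto_derive. repeat split; try (apply exd_ps; apply rad_lt; auto); lra. }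
  rewrite (Derive_ext_loc _ (RInt Kf 0)).
  - transitivity (Kf y); [|reflexivity]. apply Derive_RInt.
    + apply filter_imp with inI; [|apply locally_I; auto].
      intros z Hz. apply (@ex_RInt_continuous R_CompleteNormedModule). intros w Hw. apply Hc. apply (inI_seg z); auto.
    + apply Hc; auto.
  - apply filter_imp with inI; [|apply locally_I; auto].
    intros z Hz. apply RInt_ext. intros u Hu. apply HK.
    + apply (inI_seg z); [auto|lra].
    + unfold Rmin, Rmax in Hu. destruct (Rle_dec 0 z); lra.
Qed.

Lemma RHS1_eq n s y : List.Forall (fun k => (1 <= k)%nat) s -> inI y -> y <> 0 ->
  RHS1 n s y = PSeries (gam true n s) (sin y).
Proof.
  intros Hf Hy Hy0. unfold RHS1.
  rewrite (Derive_word _ (gam true n s)); auto.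
  - pose proof (sin_neq0 y Hy Hy0). pose proof (cos_pos_I y Hy).
    unfold csc, cot, tan. toR. field. split; lra.
  - apply gam_conv; auto.
  - intros u Hu Hu0. apply strict_formula; auto.
Qed.

Lemma RHS2_eq n s y : List.Forall (fun k => (1 <= k)%nat) s -> inI y -> y <> 0 ->
  RHS2 n s y = PSeries (gam false n s) (sin y).
Proof.
  intros Hf Hy Hy0. unfold RHS2.
  rewrite (Derive_word2 _ (gam false n s)); auto.
  - pose proof (sin_neq0 y Hy Hy0). pose proof (cos_pos_I y Hy).
    unfold cot, tan. toR. field. split; lra.
  - apply gam_conv; auto.
  - intros u Hu Hu0. apply ns_formula; auto.
Qed.

Lemma trunc_lim b n s x : s <> [] -> List.Forall (fun k => (1 <= k)%nat) s -> Rabs x <= 1 ->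
  is_lim_seq (trunc b s n x) (PSeries (gam b n s) x).
Proof.
  intros Hne Hf Hx. destruct s as [|s1 r]; [congruence|].
  eapply is_lim_seq_ext; [|apply (lim_trunc (fun m => al m * cc b n (s1 :: r) m)); apply exps_le1; auto].
  intros N. unfold trunc. rewrite fold_ssum. apply ssum_ext. intros k _. rewrite Nat.add_0_l.
  rewrite a_al. unfold cc. assert (INR (2 * k + 1) ^ s1 <> 0) by (apply pow_nonzero; apply not_0_INR; lia).
  toR. field. auto.
Qed.

Lemma msum_eq b n s x : s <> [] -> List.Forall (fun k => (1 <= k)%nat) s -> Rabs x <= 1 ->
  msum b s n x = PSeries (gam b n s) x.
Proof.
  intros. unfold msum. rewrite (is_lim_seq_unique _ _ (trunc_lim b n s x H H0 H1)). reflexivity.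
Qed.

Lemma even_ps f x : PSeries (ev f) (- x) = PSeries (ev f) x.
Proof.
  apply Series_ext. intros k. destruct (nat_parity k) as [m [-> | ->]].
  - rewrite !pow_mult. replace ((- x) ^ 2) with (x ^ 2) by (toR; ring). auto.
  - rewrite ev_odd. toR. ring.
Qed.

Lemma abel_nonneg g : CV_disk g 1 -> Rbar_le 1 (CV_radius g) ->
  filterlim (PSeries g) (at_left 1) (locally (PSeries g 1)).
Proof.
  intros Hd Hr. destruct (Rbar_lt_dec 1 (CV_radius g)) as [Hlt|Hnlt].
  - apply (filterlim_filter_le_1 (F := locally 1)); [apply filter_le_within|].
    apply continuity_pt_filterlim. apply PSeries_continuity. rewrite Rabs_R1. auto.
  - assert (Heq : CV_radius g = Finite 1).
    { apply Rbar_le_antisym; auto. apply Rbar_not_lt_le. auto. }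
    pose proof (Abel g) as HA. rewrite Heq in HA. simpl in HA. apply HA; simpl; auto.
    + lra.
    + apply CV_disk_correct. auto.
Qed.

Lemma sin_left : filterlim sin (at_left (PI / 2)) (at_left 1).
Proof.
  intros P HP.
  assert (Hc : filterlim sin (locally (PI / 2)) (locally 1)).
  { rewrite <- sin_PI2. apply continuity_pt_filterlim. apply continuity_sin. }
  specialize (Hc _ HP). unfold filtermap in Hc.
  assert (Hl : locally (PI / 2) (fun y => 0 < y)).
  { pose proof PI_RGT_0. apply (locally_interval _ _ (Finite 0) p_infty); simpl; auto. lra. }
  unfold filtermap, at_left, within. generalize (filter_and _ _ Hc Hl). apply filter_imp.
  intros y [H1 H2] H3. apply H1. assert (inI y) by (split; lra). pose proof (sin_abs_I y H).
  apply Rabs_def2 in H0. lra.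
Qed.

Lemma msin_right : filterlim (fun y => - sin y) (at_right (- PI / 2)) (at_left 1).
Proof.
  intros P HP.
  assert (Hc : filterlim (fun y => - sin y) (locally (- PI / 2)) (locally 1)).
  { replace 1 with (- sin (- PI / 2)).
    - apply (continuity_pt_filterlim (fun y => - sin y)). apply continuity_pt_opp. apply continuity_sin.
    - replace (- PI / 2) with (- (PI / 2)) by field. rewrite sin_neg, sin_PI2. ring. }
  specialize (Hc _ HP). unfold filtermap in Hc.
  assert (Hl : locally (- PI / 2) (fun y => y < 0)).
  { pose proof PI_RGT_0. apply (locally_interval _ _ m_infty (Finite 0)); simpl; auto. lra. }
  unfold filtermap, at_right, within. generalize (filter_and _ _ Hc Hl). apply filter_imp.
  intros y [H1 H2] H3. apply H1. assert (inI y) by (split; lra). pose proof (sin_abs_I y H).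
  apply Rabs_def2 in H0. lra.
Qed.
Lemma sin_le1 y : Rabs (sin y) <= 1.
Proof. apply Rabs_le. apply SIN_bound. Qed.

Lemma lim0 b n s (R0 : R -> R) : List.Forall (fun k => (1 <= k)%nat) s ->
  (forall y, inI y -> y <> 0 -> R0 y = PSeries (gam b n s) (sin y)) ->
  is_lim R0 0 (PSeries (gam b n s) (sin 0)).
Proof.
  intros Hf HR.
  apply is_lim_ext_loc with (fun y => PSeries (gam b n s) (sin y)).
  - simpl. unfold locally', within. apply filter_imp with inI.
    + intros y Hy Hy0. symmetry. apply HR; auto.
    + apply locally_I. pose proof PI_RGT_0. split; lra.
  - assert (L : continuity_pt (fun y => PSeries (gam b n s) (sin y)) 0).
    2: { exact (is_lim_continuity _ 0 L). }
    apply continuity_pt_filterlim. apply (exd_cont (fun y => PSeries (gam b n s) (sin y)) 0). auto_derive.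
    apply exd_ps. apply rad_lt; [apply gam_conv; auto|]. rewrite sin_0, Rabs_R0. lra.
Qed.

Lemma limL b n s (R0 : R -> R) : List.Forall (fun k => (1 <= k)%nat) s ->
  (forall y, inI y -> y <> 0 -> R0 y = PSeries (gam b n s) (sin y)) ->
  filterlim R0 (at_left (PI / 2)) (locally (PSeries (gam b n s) 1)).
Proof.
  intros Hf HR. pose proof PI_RGT_0.
  apply filterlim_ext_loc with (fun y => PSeries (gam b n s) (sin y)).
  - unfold at_left, within. apply filter_imp with (fun y => 0 < y).
    + intros y Hy Hy1. symmetry. apply HR; [split; lra | lra].
    + apply (locally_interval _ _ (Finite 0) p_infty); simpl; auto. lra.
  - apply (filterlim_comp _ _ _ sin (PSeries (gam b n s)) _ (at_left 1)).
    + apply sin_left.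
    + apply abel_nonneg; apply gam_conv; auto.
Qed.

Lemma limR b n s (R0 : R -> R) : List.Forall (fun k => (1 <= k)%nat) s ->
  (forall y, inI y -> y <> 0 -> R0 y = PSeries (gam b n s) (sin y)) ->
  filterlim R0 (at_right (- PI / 2)) (locally (PSeries (gam b n s) 1)).
Proof.
  intros Hf HR. pose proof PI_RGT_0.
  apply filterlim_ext_loc with (fun y => PSeries (gam b n s) (- sin y)).
  - unfold at_right, within. apply filter_imp with (fun y => y < 0).
    + intros y Hy Hy1. rewrite HR; [|split; lra | lra]. unfold gam. apply even_ps.
    + apply (locally_interval _ _ m_infty (Finite 0)); simpl; auto. lra.
  - apply (filterlim_comp _ _ _ (fun y => - sin y) (PSeries (gam b n s)) _ (at_left 1)).
    + apply msin_right.
    + apply abel_nonneg; apply gam_conv; auto.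
Qed.

Theorem theorem3p1 (n : nat) (s : list nat) :
  s <> nil -> List.Forall (fun k => (1 <= k)%nat) s ->
  (* both multiple series converge on [-pi/2, pi/2] *)
  (forall y, - PI / 2 <= y <= PI / 2 ->
     ex_finite_lim_seq (trunc true s n (sin y)) /\
     ex_finite_lim_seq (trunc false s n (sin y))) /\
  (* the identities, pointwise for 0 < |y| < pi/2 *)
  (forall y, - PI / 2 < y < PI / 2 -> y <> 0 ->
     msum true s n (sin y) = RHS1 n s y /\
     msum false s n (sin y) = RHS2 n s y) /\
  (* at y = 0 (removable singularity) as limits *)
  is_lim (RHS1 n s) 0 (msum true s n (sin 0)) /\
  is_lim (RHS2 n s) 0 (msum false s n (sin 0)) /\
  (* at y = +- pi/2 as one-sided limits *)
  filterlim (RHS1 n s) (at_left (PI / 2)) (locally (msum true s n (sin (PI / 2)))) /\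
  filterlim (RHS2 n s) (at_left (PI / 2)) (locally (msum false s n (sin (PI / 2)))) /\
  filterlim (RHS1 n s) (at_right (- PI / 2)) (locally (msum true s n (sin (- PI / 2)))) /\
  filterlim (RHS2 n s) (at_right (- PI / 2)) (locally (msum false s n (sin (- PI / 2)))).
Proof.
  intros Hne Hf.
  assert (H1 : forall y, inI y -> y <> 0 -> RHS1 n s y = PSeries (gam true n s) (sin y))
    by (intros; apply RHS1_eq; auto).
  assert (H2 : forall y, inI y -> y <> 0 -> RHS2 n s y = PSeries (gam false n s) (sin y))
    by (intros; apply RHS2_eq; auto).
  assert (Hm : forall b x, msum b s n (sin x) = PSeries (gam b n s) (sin x))
    by (intros; apply msum_eq; auto; apply sin_le1).
  assert (Hs1 : forall b, PSeries (gam b n s) (sin (- PI / 2)) = PSeries (gam b n s) 1).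
  { intros b. replace (- PI / 2) with (- (PI / 2)) by field. rewrite sin_neg, sin_PI2.
    unfold gam. apply even_ps. }
  split; [|split; [|split; [|split; [|split; [|split; [|split]]]]]].
  - intros y Hy. split; eexists; apply trunc_lim; auto; apply sin_le1.
  - intros y Hy Hy0. rewrite !Hm. rewrite H1, H2; auto.
  - rewrite Hm. apply lim0; auto.
  - rewrite Hm. apply lim0; auto.
  - rewrite Hm, sin_PI2. apply limL; auto.
  - rewrite Hm, sin_PI2. apply limL; auto.
  - rewrite Hm, Hs1. apply limR; auto.
  - rewrite Hm, Hs1. apply limR; auto.
Qed.
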